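(* If $n>1$ and $\gcd(n,30)=1$, then there exists an $n\times n$ panstochastic matrix that is not a convex combination of panmagic permutation matrices.
   Context: Rows and columns of $n\times n$ matrices are indexed by $\Omega_n=\{0,\dots,n-1\}$. The $k$th upward (resp. downward) diagonal consists of positions $(i,j)$ with $i+j\equiv k$ (resp. $i-j\equiv k$) $\pmod n$. A real $n\times n$ matrix is panstochastic if its entries are nonnegative and its entries along every row, column, upward diagonal and downward diagonal sum to $1$. A panmagic permutation matrix is a permutation matrix $P_\pi$ ($(i,j)$ entry $1$ if $i=\pi(j)$, else $0$) that is panstochastic. A convex combination is a linear combination with nonnegative coefficients summing to $1$. *)

(* Defs.v *)
From mathcomp Require Import all_boot all_order all_algebra all_fingroup.
From mathcomp Require Import reals.
Set Implicit Arguments. Unset Strict Implicit. Unset Printing Implicit Defensive.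
Import Order.TTheory GRing.Theory Num.Theory.
Local Open Scope ring_scope.

Definition updiag (n : nat) (k i j : 'I_n) : bool := ((i + j) %% n == k)%N.
Definition downdiag (n : nat) (k i j : 'I_n) : bool := ((i + (n - j)) %% n == k)%N.

Definition panstochastic (R : realFieldType) (n : nat) (A : 'M[R]_n) : Prop :=
  [/\ forall i j, 0 <= A i j,
      forall i, \sum_(j < n) A i j = 1,
      forall j, \sum_(i < n) A i j = 1,
      forall k : 'I_n, \sum_(i < n) \sum_(j < n | updiag k i j) A i j = 1
    & forall k : 'I_n, \sum_(i < n) \sum_(j < n | downdiag k i j) A i j = 1].

Definition perm_matrix (R : realFieldType) (n : nat) (s : 'S_n) : 'M[R]_n :=
  \matrix_(i < n, j < n) (if i == s j then 1 else 0).

Definition panmagic_perm (R : realFieldType) (n : nat) (s : 'S_n) : Prop :=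
  panstochastic (perm_matrix R s).

Definition conv_panmagic (R : realFieldType) (n : nat) (A : 'M[R]_n) : Prop :=
  exists c : {ffun 'S_n -> R},
    [/\ forall s, 0 <= c s,
        \sum_s c s = 1,
        forall s, c s != 0 -> panmagic_perm R s
      & A = \sum_s c s *: perm_matrix R s].

(* Main.v *)
Require Import Defs.
From mathcomp Require Import all_boot all_order all_algebra all_fingroup.
From mathcomp Require Import reals.
From mathcomp Require Import ring lra.
Set Implicit Arguments. Unset Strict Implicit. Unset Printing Implicit Defensive.
Import Order.TTheory GRing.Theory Num.Theory.
Local Open Scope ring_scope.

Section ZpFacts.
Variable m : nat.
Local Notation p := m.+2.
Hypothesis hc : coprime p 30.

Lemma updiagE (k i j : 'I_p) : updiag k i j = ((i + j)%R == k).
Proof. by rewrite /updiag; apply/eqP/eqP => [h|<-] //; apply: val_inj. Qed.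

Lemma downdiagE (k i j : 'I_p) : downdiag k i j = ((i - j)%R == k).
Proof.
rewrite /downdiag; apply/eqP/eqP => [h|<-] /=; last by rewrite modnDmr.
by apply: val_inj; rewrite /= modnDmr.
Qed.

Lemma toZ_eq0 (z : int) : (z%:~R == 0 :> 'I_p) = (p %| `|z|)%N.
Proof.
have nat0 k : ((k%:R : 'I_p) == 0) = (p %| k)%N.
  by rewrite Zp_nat /dvdn; apply/eqP/eqP => [/(congr1 val)|h] //=; apply: val_inj.
case: z => k; first by rewrite /= nat0.
by rewrite NegzE mulrNz oppr_eq0 nat0.
Qed.

Lemma cop720 : coprime p 720.
Proof.
have h : (720 %| 30 ^ 4)%N by [].
by rewrite (coprime_dvdr h) // coprimeXr.
Qed.

Lemma safe_eq (x y : int) : ((x - y) %| 720)%Z ->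
  (x%:~R == y%:~R :> 'I_p) = (x == y).
Proof.
move=> hd; rewrite -subr_eq0 -intrB toZ_eq0.
case: (eqVneq x y) => [->|nxy]; first by rewrite subrr dvdn0.
apply/negbTE/negP => hp.
have h1 : (p %| 720)%N by apply: dvdn_trans hp hd.
by move: cop720; rewrite /coprime (gcdn_idPl h1).
Qed.
End ZpFacts.
Section Count.
Variable R : realType.
Variable m : nat.
Local Notation p := m.+2.

Lemma sum_pt (T : finType) (x0 : T) : \sum_(x : T) ((x == x0)%:R : R) = 1.
Proof.
rewrite (bigD1 x0) //= eqxx big1 ?addr0 // => x /negbTE -> //.
Qed.

Lemma sum_pt2 (T : finType) (x0 y0 : T) :
  \sum_(x : T) \sum_(y : T) (((x == x0) && (y == y0))%:R : R) = 1.
Proof.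
rewrite (bigD1 x0) //=.
rewrite [X in _ + X]big1 ?addr0.
  by rewrite -[RHS](sum_pt y0); apply: eq_bigr => y _; rewrite eqxx.
by move=> x /negbTE hx; rewrite big1 // => y _; rewrite hx.
Qed.

Lemma count1 (a b d e c f : 'I_p) : (a * e - b * d) \is a GRing.unit ->
  \sum_(i : 'I_p) \sum_(j : 'I_p)
     (((a * i + b * j == c) && (d * i + e * j == f))%:R : R) = 1.
Proof.
move=> hu; set u := a * e - b * d.
pose i0 := (e * c - b * f) / u; pose j0 := (a * f - d * c) / u.
have ei0 : u * i0 = e * c - b * f by rewrite /i0 mulrC divrK.
have ej0 : u * j0 = a * f - d * c by rewrite /j0 mulrC divrK.
have key i j : ((a * i + b * j == c) && (d * i + e * j == f)) = ((i == i0) && (j == j0)).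
  apply/andP/andP => [[/eqP h1 /eqP h2]|[/eqP -> /eqP ->]].
  split; apply/eqP; apply: (mulrI hu).
    by rewrite ei0 -h1 -h2 /u; ring.
  by rewrite ej0 -h1 -h2 /u; ring.
split; apply/eqP; apply: (mulrI hu).
  by rewrite mulrDr mulrCA ei0 mulrCA ej0 /u; ring.
by rewrite mulrDr mulrCA ei0 mulrCA ej0 /u; ring.
rewrite -[RHS](sum_pt2 i0 j0); apply: eq_bigr => i _; apply: eq_bigr => j _.
by rewrite key.
Qed.

Definition eqn (a b c i j : 'I_p) : bool := a * i + b * j == c.
Definition toZ (z : int) : 'I_p := z%:~R.
Arguments toZ : simpl never.
Definition pt (q : int * int) (i j : 'I_p) : bool := (i == toZ q.1) && (j == toZ q.2).
Definition cnt (s : seq (int * int)) (i j : 'I_p) : R := \sum_(q <- s) ((pt q i j)%:R).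
Definition Rli : seq (int * int) :=
  [:: (-8, -2); (8, 2); (-4, 8); (-2, 4); (2, -4); (4, -8)].
Definition Dli : seq (int * int) :=
  [:: (-8, 4); (-4, 2); (-2, -8); (2, 8); (4, -2); (8, -4)].
Definition Fm (i j : 'I_p) := eqn 1 (-4) 0 i j.
Definition Gm (i j : 'I_p) := eqn 2 1 0 i j.
Definition Aval (i j : 'I_p) : R :=
  2^-1 * ((Fm i j)%:R + (Gm i j)%:R - cnt Rli i j + cnt Dli i j).
Definition LS (a b c : 'I_p) (M : 'I_p -> 'I_p -> R) :=
  \sum_i \sum_j ((eqn a b c i j)%:R * M i j).

Lemma LS_ind (a b c d e f : 'I_p) : (a * e - b * d) \is a GRing.unit ->
  LS a b c (fun i j => (eqn d e f i j)%:R) = 1.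
Proof.
move=> hu; rewrite /LS -[RHS](count1 c f hu); apply: eq_bigr => i _; apply: eq_bigr => j _.
by rewrite -natrM mulnb.
Qed.

Lemma LS_cnt (a b c : 'I_p) s :
  LS a b c (cnt s) = \sum_(q <- s) ((eqn a b c (toZ q.1) (toZ q.2))%:R).
Proof.
rewrite /LS /cnt.
under eq_bigr do under eq_bigr do rewrite mulr_sumr.
under eq_bigr do rewrite exchange_big /=.
rewrite exchange_big /=; apply: eq_bigr => q _.
rewrite -[RHS]mulr1 -[X in _ = _ * X](sum_pt2 (toZ q.1) (toZ q.2)) mulr_sumr.
apply: eq_bigr => i _; rewrite mulr_sumr; apply: eq_bigr => j _.
rewrite /pt; case: (eqVneq i (toZ q.1)) => [->|] /=; last by rewrite !mulr0.
by case: (eqVneq j (toZ q.2)) => [->|] /=; rewrite ?mulr0.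
Qed.

Lemma LS_lin (a b c : 'I_p) (f1 f2 f3 f4 : 'I_p -> 'I_p -> R) :
  LS a b c (fun i j => 2^-1 * (f1 i j + f2 i j - f3 i j + f4 i j)) =
  2^-1 * (LS a b c f1 + LS a b c f2 - LS a b c f3 + LS a b c f4).
Proof.
rewrite /LS -big_split -sumrB -big_split mulr_sumr /=; apply: eq_bigr => i _.
rewrite -big_split -sumrB -big_split mulr_sumr /=; apply: eq_bigr => j _.
by rewrite /=; ring.
Qed.

Lemma perm_sum (v : int * int -> int) (c : 'I_p) :
  perm_eq (map v Rli) (map v Dli) ->
  \sum_(q <- Rli) ((toZ (v q) == c)%:R : R) = \sum_(q <- Dli) ((toZ (v q) == c)%:R : R).
Proof.
move=> hv.
transitivity (\sum_(z <- map v Rli) ((toZ z == c)%:R : R)); first by rewrite big_map.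
by rewrite (perm_big _ hv) big_map.
Qed.

Lemma permR1 : perm_eq (map (fun q : int * int => q.1) Rli) (map (fun q => q.1) Dli).
Proof. by []. Qed.
Lemma permR2 : perm_eq (map (fun q : int * int => q.2) Rli) (map (fun q => q.2) Dli).
Proof. by []. Qed.
Lemma permR3 : perm_eq (map (fun q : int * int => q.1 + q.2) Rli) (map (fun q => q.1 + q.2) Dli).
Proof. by []. Qed.
Lemma permR4 : perm_eq (map (fun q : int * int => q.1 - q.2) Rli) (map (fun q => q.1 - q.2) Dli).
Proof. by []. Qed.


Lemma row_LS (M : 'I_p -> 'I_p -> R) (i0 : 'I_p) : \sum_j M i0 j = LS 1 0 i0 M.
Proof.
rewrite /LS [RHS](bigD1 i0) //= [X in _ = _ + X]big1 ?addr0.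
  by apply: eq_bigr => j _; rewrite /eqn mul1r mul0r addr0 eqxx mul1r.
move=> i /negbTE hi; rewrite big1 // => j _.
by rewrite /eqn mul1r mul0r addr0 hi mul0r.
Qed.

Lemma col_LS (M : 'I_p -> 'I_p -> R) (j0 : 'I_p) : \sum_i M i j0 = LS 0 1 j0 M.
Proof.
rewrite /LS; apply: eq_bigr => i _.
rewrite (bigD1 j0) //= [X in _ = _ + X]big1 ?addr0.
  by rewrite /eqn mul1r mul0r add0r eqxx mul1r.
by move=> j /negbTE hj; rewrite /eqn mul1r mul0r add0r hj mul0r.
Qed.

Lemma up_LS (M : 'I_p -> 'I_p -> R) (k : 'I_p) :
  \sum_(i < p) \sum_(j < p | updiag k i j) M i j = LS 1 1 k M.
Proof.
rewrite /LS; apply: eq_bigr => i _; rewrite big_mkcond; apply: eq_bigr => j _.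
by rewrite updiagE /eqn !mul1r; case: ifP => _; rewrite ?mul1r ?mul0r.
Qed.

Lemma down_LS (M : 'I_p -> 'I_p -> R) (k : 'I_p) :
  \sum_(i < p) \sum_(j < p | downdiag k i j) M i j = LS 1 (-1) k M.
Proof.
rewrite /LS; apply: eq_bigr => i _; rewrite big_mkcond; apply: eq_bigr => j _.
by rewrite downdiagE /eqn mul1r mulN1r; case: ifP => _; rewrite ?mul1r ?mul0r.
Qed.

Hypothesis hc : coprime p 30.

Lemma unitk (k : nat) : coprime p k -> (k%:R : 'I_p) \is a GRing.unit.
Proof. by move=> h; have := @unitZpE p k isT; rewrite h. Qed.

Lemma cp2 : coprime p 2. Proof. by rewrite (coprime_dvdr (_ : 2 %| 30)%N). Qed.
Lemma cp3 : coprime p 3. Proof. by rewrite (coprime_dvdr (_ : 3 %| 30)%N). Qed.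
Lemma cp5 : coprime p 5. Proof. by rewrite (coprime_dvdr (_ : 5 %| 30)%N). Qed.
Lemma cp4 : coprime p 4. Proof. by rewrite (_ : 4 = 2 * 2)%N // coprimeMr cp2. Qed.


Definition Amx : 'M[R]_p := \matrix_(i, j) Aval i j.

Lemma LS_A (a b c : 'I_p) : (a * (-4) - b * 1) \is a GRing.unit ->
  (a * 1 - b * 2) \is a GRing.unit ->
  \sum_(q <- Rli) ((eqn a b c (toZ q.1) (toZ q.2))%:R : R) =
  \sum_(q <- Dli) ((eqn a b c (toZ q.1) (toZ q.2))%:R : R) ->
  LS a b c Aval = 1.
Proof.
move=> hF hG hRD.
have -> : LS a b c Aval = LS a b c (fun i j => 2^-1 * ((fun i j => (Fm i j)%:R) i j
   + (fun i j => (Gm i j)%:R) i j - cnt Rli i j + cnt Dli i j)) by [].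
rewrite LS_lin LS_ind // LS_ind // !LS_cnt hRD subrK.
by field.
Qed.

Lemma RD_row c : \sum_(q <- Rli) ((eqn 1 0 c (toZ q.1) (toZ q.2))%:R : R) =
  \sum_(q <- Dli) ((eqn 1 0 c (toZ q.1) (toZ q.2))%:R : R).
Proof.
have e q : eqn 1 0 c (toZ q.1) (toZ q.2) = (toZ ((fun q : int * int => q.1) q) == c).
  by rewrite /eqn mul1r mul0r addr0.
under eq_bigr do rewrite e. under [RHS]eq_bigr do rewrite e.
exact: perm_sum permR1.
Qed.

Lemma RD_col c : \sum_(q <- Rli) ((eqn 0 1 c (toZ q.1) (toZ q.2))%:R : R) =
  \sum_(q <- Dli) ((eqn 0 1 c (toZ q.1) (toZ q.2))%:R : R).
Proof.
have e q : eqn 0 1 c (toZ q.1) (toZ q.2) = (toZ ((fun q : int * int => q.2) q) == c).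
  by rewrite /eqn mul1r mul0r add0r.
under eq_bigr do rewrite e. under [RHS]eq_bigr do rewrite e.
exact: perm_sum permR2.
Qed.

Lemma RD_up c : \sum_(q <- Rli) ((eqn 1 1 c (toZ q.1) (toZ q.2))%:R : R) =
  \sum_(q <- Dli) ((eqn 1 1 c (toZ q.1) (toZ q.2))%:R : R).
Proof.
have e q : eqn 1 1 c (toZ q.1) (toZ q.2) =
    (toZ ((fun q : int * int => q.1 + q.2) q) == c).
  by rewrite /eqn !mul1r /toZ intrD.
under eq_bigr do rewrite e. under [RHS]eq_bigr do rewrite e.
exact: perm_sum permR3.
Qed.

Lemma RD_down c : \sum_(q <- Rli) ((eqn 1 (-1) c (toZ q.1) (toZ q.2))%:R : R) =
  \sum_(q <- Dli) ((eqn 1 (-1) c (toZ q.1) (toZ q.2))%:R : R).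
Proof.
have e q : eqn 1 (-1) c (toZ q.1) (toZ q.2) =
    (toZ ((fun q : int * int => q.1 - q.2) q) == c).
  by rewrite /eqn mul1r mulN1r /toZ intrB.
under eq_bigr do rewrite e. under [RHS]eq_bigr do rewrite e.
exact: perm_sum permR4.
Qed.


Lemma unitN (k : nat) : coprime p k -> (- (k%:R : 'I_p)) \is a GRing.unit.
Proof. by move=> h; rewrite unitrN unitk. Qed.

Lemma cnt_count s i j : cnt s i j = (count (fun q => pt q i j) s)%:R.
Proof.
elim: s => [|q s IH]; first by rewrite /cnt big_nil.
by rewrite /cnt big_cons -/(cnt s i j) IH /= natrD.
Qed.

Lemma toZ_lin (a b x y : int) : a%:~R * toZ x + b%:~R * toZ y = toZ (a * x + b * y).
Proof. by rewrite /toZ intrD !intrM. Qed.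

Lemma testF x y : Fm (toZ x) (toZ y) = (toZ (1 * x + (-4) * y) == 0).
Proof. by rewrite /Fm /eqn -toZ_lin. Qed.
Lemma testG x y : Gm (toZ x) (toZ y) = (toZ (2 * x + 1 * y) == 0).
Proof. by rewrite /Gm /eqn -toZ_lin. Qed.


Lemma Rcount_le1 i j : (count (fun q => pt q i j) Rli <= 1)%N.
Proof.
pose fs := map (fun q : int * int => q.1) Rli.
have hall : all (fun x => all (fun y => (x == y) || ((x - y) %| 720)%Z) fs) fs by [].
have huniq : uniq (map toZ fs).
  rewrite (map_inj_in_uniq (s := fs)) // => x y hx hy /eqP.
  case/orP: (allP (allP hall x hx) y hy) => [/eqP -> //|hd].
  by rewrite /toZ safe_eq // => /eqP.
apply: (leq_trans (sub_count (a2 := fun q : int * int => i == toZ q.1) _ _)).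
  by move=> q /andP [].
have -> : count (fun q : int * int => i == toZ q.1) Rli = count_mem i (map toZ fs).
  by rewrite count_map /fs count_map; apply: eq_count => q /=; rewrite eq_sym.
by rewrite count_uniq_mem // leq_b1.
Qed.

Lemma Rsupp q : q \in Rli -> Fm (toZ q.1) (toZ q.2) || Gm (toZ q.1) (toZ q.2).
Proof.
move=> hq.
have H : all (fun q : int * int => (1 * q.1 + (-4) * q.2 == 0) || (2 * q.1 + 1 * q.2 == 0)) Rli
  by [].
by rewrite testF testG; case/orP: (allP H q hq) => /eqP ->; rewrite /toZ eqxx ?orbT.
Qed.

Lemma Aval_ge0 i j : 0 <= Aval i j.
Proof.
rewrite /Aval mulr_ge0 ?invr_ge0 ?ler0n //.
have hD : 0 <= cnt Dli i j by rewrite cnt_count ler0n.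
suff : cnt Rli i j <= (Fm i j)%:R + (Gm i j)%:R.
  by move=> h; apply: addr_ge0 => //; rewrite subr_ge0.
rewrite cnt_count.
have hle := Rcount_le1 i j.
case: (posnP (count (fun q => pt q i j) Rli)) => [-> | hpos].
  by rewrite addr_ge0 ?ler0n.
have -> : count (fun q => pt q i j) Rli = 1%N by apply/eqP; rewrite eqn_leq hle hpos.
have : has (fun q => pt q i j) Rli by rewrite has_count.
case/hasP => q hq /andP [/eqP hi /eqP hj].
rewrite hi hj; case/orP: (Rsupp hq) => ->.
  by rewrite lerDl ler0n.
by rewrite lerDr ler0n.
Qed.


Lemma Amx_pan : panstochastic Amx.
Proof.
split.
- by move=> i j; rewrite mxE Aval_ge0.
- move=> i; under eq_bigr do rewrite mxE.
  rewrite row_LS; apply: LS_A; last exact: RD_row.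
    by rewrite (_ : 1 * -4 - 0 * 1 = - 4%:R) ?unitN ?cp4 //; ring.
  by rewrite (_ : 1 * 1 - 0 * 2 = 1) ?unitr1 //; ring.
- move=> j; under eq_bigr do rewrite mxE.
  rewrite col_LS; apply: LS_A; last exact: RD_col.
    by rewrite (_ : 0 * -4 - 1 * 1 = - 1) ?unitrN ?unitr1 //; ring.
  by rewrite (_ : 0 * 1 - 1 * 2 = - 2%:R) ?unitN ?cp2 //; ring.
- move=> k; under eq_bigr do under eq_bigr do rewrite mxE.
  rewrite up_LS; apply: LS_A; last exact: RD_up.
    by rewrite (_ : 1 * -4 - 1 * 1 = - 5%:R) ?unitN ?cp5 //; ring.
  by rewrite (_ : 1 * 1 - 1 * 2 = - 1) ?unitrN ?unitr1 //; ring.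
- move=> k; under eq_bigr do under eq_bigr do rewrite mxE.
  rewrite down_LS; apply: LS_A; last exact: RD_down.
    by rewrite (_ : 1 * -4 - (-1) * 1 = - 3%:R) ?unitN ?cp3 //; ring.
  by rewrite (_ : 1 * 1 - (-1) * 2 = 3%:R) ?unitk ?cp3 //; ring.
Qed.


Definition good (x y : int) := (x == y) || ((x - y) %| 720)%Z.
Definition sep (u q : int * int) :=
  [|| good u.1 q.1 && good u.2 q.2, good u.1 q.1 && (u.1 != q.1)
    | good u.2 q.2 && (u.2 != q.2)].

Lemma eqZ_good x y : good x y -> (toZ x == toZ y) = (x == y).
Proof. by case/orP => [/eqP ->|h]; rewrite ?eqxx // /toZ safe_eq. Qed.

Lemma pt_eval x y q : sep (x, y) q ->
  pt q (toZ x) (toZ y) = (x == q.1) && (y == q.2).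
Proof.
rewrite /pt /sep /=; case/or3P => [/andP [h1 h2]|/andP [h1 h2]|/andP [h1 h2]].
- by rewrite !eqZ_good.
- by rewrite eqZ_good // (negbTE h2).
- by rewrite (eqZ_good h1) (negbTE h2) !andbF.
Qed.

Lemma cnt_eval x y s : all (sep (x, y)) s ->
  cnt s (toZ x) (toZ y) = (count (fun q : int * int => (x == q.1) && (y == q.2)) s)%:R.
Proof.
move=> /allP h; rewrite cnt_count; congr (_%:R); apply: eq_in_count => q hq.
exact: pt_eval (h q hq).
Qed.

Lemma Aval_pt x y : good (1 * x + (-4) * y) 0 -> good (2 * x + 1 * y) 0 ->
  all (sep (x, y)) Rli -> all (sep (x, y)) Dli ->
  Aval (toZ x) (toZ y) = 2^-1 * (((1 * x + (-4) * y) == 0)%:R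
     + ((2 * x + 1 * y) == 0)%:R
     - (count (fun q : int * int => (x == q.1) && (y == q.2)) Rli)%:R
     + (count (fun q : int * int => (x == q.1) && (y == q.2)) Dli)%:R).
Proof.
move=> hF hG hR hD.
rewrite /Aval testF testG !cnt_eval // (_ : (0 : 'I_p) = toZ 0) // !eqZ_good //.
Qed.

Lemma AX : Aval (toZ (-4)) (toZ 2) = 2^-1.
Proof. by rewrite Aval_pt //=; field. Qed.
Lemma Aa : Aval (toZ (-4)) (toZ (-1)) = 2^-1.
Proof. by rewrite Aval_pt //=; field. Qed.
Lemma Ab : Aval (toZ (-1)) (toZ 2) = 2^-1.
Proof. by rewrite Aval_pt //=; field. Qed.


Lemma sum_pair (M : 'I_p -> 'I_p -> R) (P : 'I_p -> 'I_p -> bool) :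
  \sum_(i < p) \sum_(j < p | P i j) M i j =
  \sum_(t : 'I_p * 'I_p) (P t.1 t.2)%:R * M t.1 t.2.
Proof.
under eq_bigr do rewrite big_mkcond.
rewrite pair_bigA; apply: eq_bigr => t _ /=.
by case: ifP => _; rewrite ?mul1r ?mul0r.
Qed.

Lemma two_supp (T : finType) (u v : T) (f g : T -> R) : u != v ->
  (forall t, 0 <= f t) -> \sum_t f t = 1 -> f u + f v = 1 ->
  (forall t, f t = 0 -> g t = 0) -> \sum_t g t = g u + g v.
Proof.
move=> nuv f0 fs fuv fg.
have vu : v != u by rewrite eq_sym.
move: fs; rewrite (bigD1 u) //= (bigD1 v) //= addrA fuv => /eqP.
rewrite -[X in _ == X]addr0 => /eqP /addrI hr.
have hz := psumr_eq0P (fun t _ => f0 t) hr.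
rewrite (bigD1 u) //= (bigD1 v) //= big1 ?addr0 ?addrA // => t ht.
exact/fg/hz.
Qed.

Lemma not_conv : ~ conv_panmagic Amx.
Proof.
case=> c [c0 c1 cpan hA].
have [s hs] : exists s, c s != 0.
  case: (pickP (fun s => c s != 0)) => [s hs|h]; first by exists s.
  move: c1; rewrite big1 => [/eqP|t _]; first by rewrite eq_sym oner_eq0.
  by move: (h t) => /negbFE/eqP.
have cs_pos : 0 < c s by rewrite lt_def hs c0.
have [_ prow pcol _ pdown] := cpan s hs.
set P := perm_matrix R s in prow pcol pdown.
have P01 i j : P i j = 0 \/ P i j = 1.
  by rewrite /P /perm_matrix mxE; case: ifP => _; [right|left].
have Pge0 i j : 0 <= P i j by case: (P01 i j) => ->; rewrite ?ler01.
have zero i j : Amx i j = 0 -> P i j = 0.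
  rewrite hA summxE (bigD1 s) //= mxE => /eqP.
  rewrite paddr_eq0 ?mulr_ge0 ?sumr_ge0 // => [/andP [/eqP h _]|t _].
    by move: h => /eqP; rewrite mulf_eq0 (negbTE hs) /= => /eqP.
  by rewrite mxE mulr_ge0 // /perm_matrix mxE; case: ifP; rewrite ?ler01.
have Ag0 i j : 0 <= Amx i j by rewrite mxE Aval_ge0.
have [_ arow acol _ adown] := Amx_pan.
have h1 : P (toZ (-4)) (toZ (-1)) + P (toZ (-4)) (toZ 2) = 1.
  rewrite -(prow (toZ (-4))); symmetry; apply: (two_supp (f := fun j => Amx (toZ (-4)) j)).
  - by rewrite eqZ_good.
  - by move=> t; apply: Ag0.
  - exact: arow.
  - by rewrite !mxE Aa AX; field.
  - by move=> t; apply: zero.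
have h2 : P (toZ (-4)) (toZ 2) + P (toZ (-1)) (toZ 2) = 1.
  rewrite -(pcol (toZ 2)); symmetry; apply: (two_supp (f := fun i => Amx i (toZ 2))).
  - by rewrite eqZ_good.
  - by move=> t; apply: Ag0.
  - exact: acol.
  - by rewrite !mxE Ab AX; field.
  - by move=> t; apply: zero.
have dA : downdiag (toZ (-3)) (toZ (-4)) (toZ (-1)).
  by rewrite downdiagE /toZ -intrB.
have dB : downdiag (toZ (-3)) (toZ (-1)) (toZ 2).
  by rewrite downdiagE /toZ -intrB.
have h3 : P (toZ (-4)) (toZ (-1)) + P (toZ (-1)) (toZ 2) = 1.
  have := pdown (toZ (-3)); rewrite sum_pair => <-.
  rewrite (two_supp (u := (toZ (-4), toZ (-1))) (v := (toZ (-1), toZ 2))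
     (f := fun t => (downdiag (toZ (-3)) t.1 t.2)%:R * Amx t.1 t.2)) /=.
  - by rewrite dA dB !mul1r.
  - by rewrite xpair_eqE eqZ_good.
  - by move=> t; rewrite mulr_ge0 ?ler0n.
  - by rewrite -sum_pair adown.
  - by rewrite dA dB !mul1r !mxE Aa Ab; field.
  - move=> t /eqP; rewrite mulf_eq0 => /orP [/eqP ->|/eqP /zero ->]; by rewrite ?mul0r ?mulr0.
move: h1 h2 h3.
case: (P01 (toZ (-4)) (toZ (-1))) => ->; case: (P01 (toZ (-4)) (toZ 2)) => ->;
  case: (P01 (toZ (-1)) (toZ 2)) => ->; lra.
Qed.

End Count.

Theorem lemma4p1 (R : realType) (n : nat) :
  (1 < n)%N -> coprime n 30 ->
  exists A : 'M[R]_n, panstochastic A /\ ~ conv_panmagic A.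
Proof.
case: n => [|[|m]] // _ hc.
exists (Amx R m); split; [exact: Amx_pan | exact: not_conv].
Qed.
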